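(* Let $d=\infty$, $C>0$, ${\boldsymbol\gamma}\in\mathcal S_{d,C}$ and ${\boldsymbol\gamma}^\uparrow=T^\uparrow_{d,C}{\boldsymbol\gamma}$. For ${\boldsymbol\gamma}\in\mathcal W_d$ and $\tau>0$ write ${\boldsymbol\gamma}^{1/\tau}=(\gamma_u^{1/\tau})_{u\in\mathcal U_d}$. Then: (1) for every $\tau>0$, if $\sum_{u\in\mathcal U_d}(\gamma^\uparrow_u)^{1/\tau}<\infty$ then ${\boldsymbol\gamma}^{1/\tau}\in\mathcal S_{d,C^{1/\tau}}$; (2) for every $\tau\ge1$, if ${\boldsymbol\gamma}^{1/\tau}\in\mathcal S_{d,\sqrt2\,C^{1/\tau}}$ then $\sum_{u\in\mathcal U_d}(\gamma^\uparrow_u)^{1/\tau}<\infty$.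
   Context: Let $\mathcal U_\infty$ be the set of all finite subsets of $\mathbb N$. Weights are families ${\boldsymbol\gamma}=(\gamma_u)_{u\in\mathcal U_\infty}$ of non-negative reals; $\mathcal W_\infty$ is the set of all weights. For $C>0$, $\mathcal S_{\infty,C}=\{{\boldsymbol\gamma}\in\mathcal W_\infty:\sum_{v\in\mathcal U_\infty}C^{2|v|}\gamma_v<\infty\}$, and $T^\uparrow_{\infty,C}\colon\mathcal S_{\infty,C}\to\mathcal W_\infty$ is given by $(T^\uparrow_{\infty,C}{\boldsymbol\gamma})_u=\sum_{v\in\mathcal U_\infty,\,u\subseteq v}C^{2|v|}\gamma_v$. *)

(* Defs.v *)
From HB Require Import structures.
From mathcomp Require Import all_boot all_order all_algebra.
From mathcomp Require Import finmap.
From mathcomp Require Import all_classical all_reals all_analysis.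
Set Implicit Arguments. Unset Strict Implicit. Unset Printing Implicit Defensive.
Import Order.TTheory GRing.Theory Num.Theory.
Local Open Scope classical_set_scope.
Local Open Scope ring_scope.

(* Finite subsets of N (the index set U_infinity) are represented by {fset nat}.
   A weight is a function gamma : {fset nat} -> R (non-negativity is a
   separate hypothesis). *)

Definition summable_w (R : realType) (f : {fset nat} -> R) : Prop :=
  (\esum_(u in [set: {fset nat}]) (f u)%:E < +oo)%E.

Definition inS (R : realType) (C : R) (gamma : {fset nat} -> R) : Prop :=
  (forall u, 0 <= gamma u) /\
  summable_w (fun v => C ^+ (2 * #|` v|)%N * gamma v).

(* T^up_{infinity,C} gamma, u-th component (finite whenever gamma is in S) *)
Definition Tup (R : realType) (C : R) (gamma : {fset nat} -> R) (u : {fset nat}) : R :=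
  fine (\esum_(v in [set v : {fset nat} | (u `<=` v)%fset]) (C ^+ (2 * #|` v|)%N * gamma v)%:E).

Definition wpow (R : realType) (gamma : {fset nat} -> R) (tau : R) : {fset nat} -> R :=
  fun u => gamma u `^ tau^-1.

(* Main.v *)
Require Import Defs.
From HB Require Import structures.
From mathcomp Require Import all_boot all_order all_algebra.
From mathcomp Require Import finmap.
From mathcomp Require Import all_classical all_reals all_analysis.
Import Order.TTheory GRing.Theory Num.Theory.
Local Open Scope ring_scope.

Section H.
Variable R : realType.

Lemma le_powR_small (x p : R) : 0 <= x <= 1 -> p <= 1 -> x <= x `^ p.
Proof.
move=> /andP[x0 x1] p1; have [->|xn0] := eqVneq x 0; first exact: powR_ge0.
apply: ger1_powR => //; rewrite x1 andbT lt_def xn0 x0 //.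
Qed.

Lemma powR_subadd (p a b : R) : 0 < p <= 1 -> 0 <= a -> 0 <= b ->
  (a + b) `^ p <= a `^ p + b `^ p.
Proof.
move=> /andP[p0 p1] a0 b0.
have [s0|sn0] := eqVneq (a + b) 0.
  have /andP[/eqP a00 /eqP b00] : (a == 0) && (b == 0) by rewrite -paddr_eq0 // s0.
  rewrite a00 b00 addr0.
  by rewrite powR0 ?gt_eqF // addr0.
have s0 : 0 < a + b by rewrite lt_def sn0 addr_ge0.
have x0 : 0 <= a / (a + b) by rewrite divr_ge0 // ltW.
have y0 : 0 <= b / (a + b) by rewrite divr_ge0 // ltW.
have x1 : a / (a + b) <= 1 by rewrite ler_pdivrMr // mul1r lerDl.
have y1 : b / (a + b) <= 1 by rewrite ler_pdivrMr // mul1r lerDr.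
have ea : a `^ p = (a + b) `^ p * (a / (a + b)) `^ p.
  by rewrite -powRM ?(ltW s0) // mulrCA divff // mulr1.
have eb : b `^ p = (a + b) `^ p * (b / (a + b)) `^ p.
  by rewrite -powRM ?(ltW s0) // mulrCA divff // mulr1.
rewrite ea eb -mulrDr.
rewrite -[X in X <= _]mulr1 ler_wpM2l ?powR_ge0 //.
have -> : 1 = a / (a + b) + b / (a + b) :> R by rewrite -mulrDl divff.
by apply: lerD; apply: le_powR_small => //; apply/andP.
Qed.
Lemma powR_subadd_seq (p : R) (T : Type) (s : seq T) (F : T -> R) :
  0 < p <= 1 -> (forall i, 0 <= F i) ->
  (\sum_(i <- s) F i) `^ p <= \sum_(i <- s) F i `^ p.
Proof.
move=> hp F0; elim: s => [|x s IH].
  by rewrite !big_nil powR0 // gt_eqF //; case/andP: hp.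
rewrite !big_cons; apply: le_trans; first (apply: powR_subadd => //; exact: sumr_ge0).
by rewrite lerD2l.
Qed.

Lemma esum_subset_le (T : choiceType) (A B : set T) (f : T -> \bar R) :
  (A `<=` B)%classic -> (forall x, B x -> (0 <= f x)%E) ->
  (\esum_(i in A) f i <= \esum_(i in B) f i)%E.
Proof.
move=> AB f0; rewrite (esum_mkcond A) (esum_mkcond B); apply: le_esum => i _.
case: ifPn => iA.
  by rewrite ifT //; move: iA; rewrite !inE => /AB.
by case: ifPn => // iB; apply: f0; move: iB; rewrite inE.
Qed.

Lemma count_sum (T : eqType) (r : seq T) (P : pred T) (x : R) :
  \sum_(u <- r) (if P u then x else 0) = x *+ count P r.
Proof.
elim: r => [|y r IH]; first by rewrite big_nil.
by rewrite big_cons IH /=; case: (P y); rewrite ?add0r // mulrS.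
Qed.

Lemma count_sub (r : seq {fset nat}) (v : {fset nat}) : uniq r ->
  (count (fun u => (u `<=` v)%fset) r <= 2 ^ #|` v|)%N.
Proof.
move=> ur; rewrite -size_filter -card_fpowerset.
apply: uniq_leq_size; first exact: filter_uniq.
by move=> u; rewrite mem_filter fpowersetE => /andP[].
Qed.

End H.

Theorem mainTheorem5 (R : realType) (C : R) (gamma : {fset nat} -> R) :
  0 < C -> inS C gamma ->
  (forall tau : R, 0 < tau ->
     summable_w (wpow (Tup C gamma) tau) ->
     inS (C `^ tau^-1) (wpow gamma tau)) /\
  (forall tau : R, 1 <= tau ->
     inS (Num.sqrt 2 * C `^ tau^-1) (wpow gamma tau) ->
     summable_w (wpow (Tup C gamma) tau)).
Proof.
move=> C0 [g0 gsum].
pose c v := C ^+ (2 * #|` v|)%N * gamma v.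
have c0 v : 0 <= c v by rewrite mulr_ge0 // exprn_ge0 // ltW.
have Efin u : \esum_(v in [set v : {fset nat} | (u `<=` v)%fset]) (c v)%:E
    \is a fin_num.
  rewrite ge0_fin_numE; last by apply: esum_ge0 => v _; rewrite lee_fin.
  apply: le_lt_trans gsum; apply: esum_subset_le => // v _; by rewrite lee_fin.
have ETup u : (Tup C gamma u)%:E =
    \esum_(v in [set v : {fset nat} | (u `<=` v)%fset]) (c v)%:E.
  by rewrite /Tup fineK.
have Tup0 u : 0 <= Tup C gamma u.
  by rewrite -lee_fin ETup; apply: esum_ge0 => v _; rewrite lee_fin.
have cTup u : c u <= Tup C gamma u.
  rewrite -lee_fin ETup -(@esum_set1 R ({fset nat} : choiceType) u (fun v => (c v)%:E)) ?lee_fin //.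
  apply: esum_subset_le => [v -> /=|v _]; [exact: fsubset_refl | by rewrite lee_fin].
have pw p n : (C `^ p) ^+ n = (C ^+ n) `^ p.
  by rewrite -powR_mulrn ?powR_ge0 // powRAC powR_mulrn // ltW.
split.
  move=> tau tau0 hsum; split; first by move=> ?; exact: powR_ge0.
  rewrite /summable_w; apply: le_lt_trans hsum; apply: le_esum => v _.
  rewrite lee_fin /wpow pw -powRM ?exprn_ge0 ?(ltW C0) //.
  apply: ge0_ler_powR; rewrite ?nnegrE ?invr_ge0 ?(ltW tau0) ?Tup0 //; last exact: cTup.
  by rewrite mulr_ge0 // exprn_ge0 // ltW.
move=> tau tau1 [_ Msum].
have tau0 : 0 < tau by apply: lt_le_trans tau1.
have p0 : 0 < tau^-1 by rewrite invr_gt0.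
have p1 : tau^-1 <= 1 by rewrite invf_le1.
have hp : 0 < tau^-1 <= 1 by rewrite p0 p1.
pose a v := (c v) `^ tau^-1.
have a0 v : 0 <= a v by exact: powR_ge0.
have ad v : (Num.sqrt 2 * C `^ tau^-1) ^+ (2 * #|` v|)%N * gamma v `^ tau^-1
    = 2 ^+ #|` v| * a v.
  rewrite /a powRM ?exprn_ge0 ?(ltW C0) // -pw exprMn mulrA.
  by rewrite exprM sqr_sqrtr // ler0n.
move: Msum; rewrite /summable_w /wpow.
under eq_esum do rewrite ad.
set M := (X in (X < _)%E) => Msum.
have BM u : (\esum_(v in [set v : {fset nat} | (u `<=` v)%fset]) (a v)%:E <= M)%E.
  apply: (@le_trans _ _ (\esum_(v in [set: {fset nat}]) (a v)%:E)).
    by apply: esum_subset_le => // v _; rewrite lee_fin.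
  by apply: le_esum => v _; rewrite lee_fin ler_peMl // exprn_ege1 // ler1n.
have Bfin u : \esum_(v in [set v : {fset nat} | (u `<=` v)%fset]) (a v)%:E
    \is a fin_num.
  rewrite ge0_fin_numE; last by apply: esum_ge0 => v _; rewrite lee_fin.
  exact: le_lt_trans (BM u) Msum.
have stepA u : ((Tup C gamma u `^ tau^-1)%:E <=
    \esum_(v in [set v : {fset nat} | (u `<=` v)%fset]) (a v)%:E)%E.
  rewrite -(fineK (Bfin u)) lee_fin.
  set b := fine _.
  have b0 : 0 <= b by rewrite -lee_fin fineK ?Bfin //; apply: esum_ge0 => v _; rewrite lee_fin.
  suff Tb : Tup C gamma u <= b `^ tau.
    apply: (@le_trans _ _ ((b `^ tau) `^ tau^-1)).
      by apply: ge0_ler_powR; rewrite ?nnegrE ?invr_ge0 ?(ltW tau0) ?Tup0 ?powR_ge0.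
    by rewrite -powRrM divff ?gt_eqF // powRr1.
  rewrite -lee_fin ETup; apply: ge_ereal_sup => _ [Y [finY YS] <-].
  have := (@ereal_sup_ubound _ [set \sum_(x \in A) (a x)%:E | A in fsets [set v : {fset nat} | (u `<=` v)%fset]] (\sum_(x \in Y) (a x)%:E)).
  move=> /(_ _)/wrap[]; first by exists Y.
  rewrite -/(esum _ _) -(fineK (Bfin u)) -/b.
  rewrite !fsbig_finite // !sumEFin !lee_fin => aY.
  set S := \sum_(x <- _) c x.
  have S0 : 0 <= S by apply: sumr_ge0.
  rewrite -[S]powRr1 // -(divff (lt0r_neq0 tau0)) mulrC powRrM.
  apply: ge0_ler_powR; rewrite ?nnegrE ?(ltW tau0) ?powR_ge0 //.
  apply: le_trans aY; exact: powR_subadd_seq.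
apply: le_lt_trans Msum.
apply: ge_ereal_sup => _ [X [finX _] <-].
rewrite fsbig_finite //.
apply: (@le_trans _ _ (\sum_(u <- fset_set X)
   \esum_(v in [set v : {fset nat} | (u `<=` v)%fset]) (a v)%:E)).
  by apply: lee_sum => u _; exact: stepA.
under eq_bigr do rewrite esum_mkcond.
rewrite -esum_sum; last by move=> v u _ _; case: ifP => // _; rewrite lee_fin.
apply: le_esum => v _.
rewrite (eq_bigr (fun u => (if (u `<=` v)%fset then a v else 0)%:E)); last first.
  move=> u _; case: (boolP (u `<=` v)%fset) => h; [by rewrite mem_set | rewrite memNset //=; exact/negP].
rewrite sumEFin lee_fin count_sum -[_ *+ count _ _]mulr_natl; apply: (ler_wpM2r (a0 v)).
by rewrite -natrX ler_nat count_sub // fset_uniq.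
Qed.
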